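(* Let $N\ge1$, $\sigma^2>0$, $P_S,P_R>0$, and for each $n=1,\dots,N$ let $\gamma_n^{sr}>0$, $\gamma_n^{rm}>0$, $\gamma_n^{re}>0$ with $\gamma_n^{rm}>\gamma_n^{re}$. Consider the problem $\mathcal{P}1$ in the variables $(P_n^s,P_n^r,t_n)_{n=1}^N$: maximize $\sum_{n=1}^N \frac12\log_2\!\Big(\frac{1+t_n}{1+P_n^r\gamma_n^{re}/\sigma^2}\Big)$ subject to $t_n\le P_n^s\gamma_n^{sr}/\sigma^2$ for all $n$; $t_n\le P_n^r\gamma_n^{rm}/\sigma^2$ for all $n$; $\sum_n P_n^s\le P_S$; $\sum_n P_n^r\le P_R$; $P_n^s\ge0$, $P_n^r\ge0$ for all $n$; and $P_n^r\gamma_n^{re}\le P_n^s\gamma_n^{sr}$ for all $n$. Then the maximum secure rate is achieved with the source and relay powers on each subcarrier satisfying $$P_n^s\gamma_n^{sr}=P_n^r\gamma_n^{rm},$$ i.e. $\mathcal{P}1$ has a global optimal solution in which this equality holds for every $n=1,\dots,N$.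
   Context: Problem $\mathcal{P}1$ is the power-allocation problem for sum secure rate maximization in an OFDMA downlink with a source, a half-duplex decode-and-forward relay, and mutually untrusted users, after each subcarrier $n$ has been assigned to the user with the best relay-to-user gain $\gamma_n^{rm}$; $\gamma_n^{re}$ is the largest relay-to-user gain among the other users (the equivalent eavesdropper), $\gamma_n^{sr}$ is the source-to-relay gain, $P_n^s,P_n^r$ are the source and relay powers on subcarrier $n$, and $t_n$ is an auxiliary variable representing $\min(P_n^s\gamma_n^{sr},P_n^r\gamma_n^{rm})/\sigma^2$. The secure rate on subcarrier $n$ is $\frac12\log_2\big((1+\min(P_n^s\gamma_n^{sr},P_n^r\gamma_n^{rm})/\sigma^2)/(1+P_n^r\gamma_n^{re}/\sigma^2)\big)$. *)

(* Defs.v *)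
From Stdlib Require Import Reals.
Open Scope R_scope.

(* rsum N f = f 0 + f 1 + ... + f (N-1)  (subcarriers indexed 0..N-1) *)
Fixpoint rsum (N : nat) (f : nat -> R) : R :=
  match N with
  | O => 0
  | S k => rsum k f + f k
  end.

Definition log2 (x : R) : R := ln x / ln 2.

Definition P1_objective (N : nat) (s2 : R) (gre : nat -> R)
    (Pr t : nat -> R) : R :=
  rsum N (fun n => / 2 * log2 ((1 + t n) / (1 + Pr n * gre n / s2))).

(* Feasible set of P1 (plus the implicit domain 1 + t_n > 0 of the log). *)
Definition P1_feasible (N : nat) (s2 PS PR : R) (gsr grm gre : nat -> R)
    (Ps Pr t : nat -> R) : Prop :=
  (forall n, (n < N)%nat ->
      t n <= Ps n * gsr n / s2 /\
      t n <= Pr n * grm n / s2 /\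
      0 <= Ps n /\ 0 <= Pr n /\
      Pr n * gre n <= Ps n * gsr n /\
      0 < 1 + t n) /\
  rsum N Ps <= PS /\
  rsum N Pr <= PR.

(* Main.v *)
Require Import Defs.
From Stdlib Require Import Reals Lra Lia.
From mathcomp Require all_boot all_algebra all_classical all_reals all_analysis Rstruct Rstruct_topology.
Open Scope R_scope.

Definition hf (a c : R) (z : R) : R :=
  / 2 * log2 ((1 + Rabs z * a) / (1 + Rabs z * c)).

Lemma cont_lin (k : R) : continuity (fun z => 1 + Rabs z * k).
Proof.
  exact (continuity_plus (fun _ => 1) (fun z => Rabs z * k)
    (continuity_const (fun _ => 1) (fun _ _ => eq_refl))
    (continuity_mult Rabs (fun _ => k) Rcontinuity_abs
       (continuity_const (fun _ => k) (fun _ _ => eq_refl)))).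
Qed.

Lemma hf_cont a c : 0 <= a -> 0 <= c -> continuity (hf a c).
Proof.
  intros Ha Hc x.
  assert (Pa : forall z, 0 < 1 + Rabs z * a).
  { intro z; pose proof (Rabs_pos z); nra. }
  assert (Pc : forall z, 0 < 1 + Rabs z * c).
  { intro z; pose proof (Rabs_pos z); nra. }
  assert (Hq : continuity (fun z => (1 + Rabs z * a) / (1 + Rabs z * c))).
  { exact (continuity_div _ _ (cont_lin a) (cont_lin c)
             (fun z => Rgt_not_eq _ _ (Pc z))). }
  assert (Hl : continuity_pt (fun z => ln ((1 + Rabs z * a) / (1 + Rabs z * c))) x).
  { apply (continuity_pt_comp (fun z => (1 + Rabs z * a) / (1 + Rabs z * c)) ln x (Hq x)).
    apply derivable_continuous_pt.
    exists (/ ((1 + Rabs x * a) / (1 + Rabs x * c))).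
    apply derivable_pt_lim_ln.
    apply Rdiv_lt_0_compat; auto. }
  unfold hf, log2.
  apply (continuity_pt_mult (fun _ => /2) (fun z => ln ((1 + Rabs z * a) / (1 + Rabs z * c)) / ln 2)).
  - apply continuity_pt_const; intros ? ?; reflexivity.
  - apply (continuity_pt_mult _ (fun _ => / ln 2)); auto.
    apply continuity_pt_const; intros ? ?; reflexivity.
Qed.

Lemma rsum_le N f g : (forall n, (n < N)%nat -> f n <= g n) -> rsum N f <= rsum N g.
Proof.
  induction N as [|N IH]; intros H; simpl; [lra|].
  apply Rplus_le_compat; [apply IH; intros; apply H; lia | apply H; lia].
Qed.

Lemma rsum_ext N f g : (forall n, (n < N)%nat -> f n = g n) -> rsum N f = rsum N g.
Proof.
  induction N as [|N IH]; intros H; simpl; [lra|].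
  rewrite IH by (intros; apply H; lia). rewrite H by lia. reflexivity.
Qed.

Lemma log2_le x y : 0 < x -> x <= y -> log2 x <= log2 y.
Proof.
  intros Hx Hxy. unfold log2.
  assert (0 < ln 2) by (rewrite <- ln_1; apply ln_increasing; lra).
  apply Rmult_le_compat_r; [left; apply Rinv_0_lt_compat; auto|].
  destruct (Rle_lt_or_eq_dec _ _ Hxy) as [H1|H1].
  - left; apply ln_increasing; auto.
  - subst; lra.
Qed.

Lemma term_le (s2 gsr grm gre Ps Pr t : R) :
  0 < s2 -> 0 < gsr -> 0 < grm -> 0 < gre -> 0 <= Ps -> 0 <= Pr ->
  t <= Ps * gsr / s2 -> t <= Pr * grm / s2 -> 0 < 1 + t ->
  / 2 * log2 ((1 + t) / (1 + Pr * gre / s2)) <=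
  hf (grm / s2) (gre / s2) (Rmin Pr (Ps * gsr / grm)).
Proof.
  intros Hs Hsr Hrm Hre HPs HPr Ht1 Ht2 Ht.
  set (m := Rmin Pr (Ps * gsr / grm)).
  assert (Hm0 : 0 <= m).
  { unfold m; apply Rmin_glb; auto. apply Rmult_le_pos; [nra | left; apply Rinv_0_lt_compat; auto]. }
  assert (HmPr : m <= Pr) by apply Rmin_l.
  assert (Htm : t <= m * grm / s2).
  { unfold m, Rmin; destruct (Rle_dec Pr (Ps * gsr / grm)); auto.
    replace (Ps * gsr / grm * grm / s2) with (Ps * gsr / s2) by (field; lra). auto. }
  unfold hf. rewrite (Rabs_pos_eq m Hm0).
  apply Rmult_le_compat_l; [lra|].
  assert (Hd1 : 0 < 1 + m * (gre / s2)).
  { assert (0 <= m * (gre / s2)) by (apply Rmult_le_pos; [auto | apply Rlt_le, Rdiv_lt_0_compat; auto]). lra. }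
  assert (Hd2 : 1 + m * (gre / s2) <= 1 + Pr * gre / s2).
  { assert (m * gre / s2 <= Pr * gre / s2).
    { unfold Rdiv; apply Rmult_le_compat_r; [left; apply Rinv_0_lt_compat; auto|]. nra. }
    replace (m * (gre / s2)) with (m * gre / s2) by (field; lra). lra. }
  assert (Hn : 1 + t <= 1 + m * (grm / s2)).
  { replace (m * (grm / s2)) with (m * grm / s2) by (field; lra). lra. }
  apply log2_le.
  - apply Rdiv_lt_0_compat; lra.
  - unfold Rdiv.
    apply Rle_trans with ((1 + m * (grm / s2)) * / (1 + Pr * gre / s2)).
    + apply Rmult_le_compat_r; [left; apply Rinv_0_lt_compat; lra| lra].
    + apply Rmult_le_compat_l; [lra|]. apply Rinv_le_contravar; lra.
Qed.

Definition feasY (N : nat) (w : nat -> R) (PS PR : R) (y : nat -> R) : Prop :=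
  (forall n, (n < N)%nat -> 0 <= y n) /\ rsum N y <= PR /\ rsum N (fun n => w n * y n) <= PS.

Module MC.
From HB Require Import structures.
From mathcomp Require Import all_boot all_order all_algebra.
From mathcomp Require Import all_classical all_reals all_analysis Rstruct Rstruct_topology.
Import Order.TTheory GRing.Theory Num.Theory.
Import numFieldNormedType.Exports.
Local Open Scope classical_set_scope.
Local Open Scope ring_scope.

Lemma rsumE N f : rsum N f = \sum_(i < N) f i.
Proof. elim: N => [|N IH] /=; first by rewrite big_ord0. by rewrite big_ord_recr /= IH. Qed.

Lemma sum_cont N (F : 'I_N -> R -> R) :
  (forall i, continuous (F i)) ->
  continuous (fun v : 'rV[R]_N => \sum_(i < N) F i (v ord0 i)).
Proof.
move=> Fc.
suff H : forall s : seq 'I_N, continuous (fun v : 'rV[R]_N => \sum_(i <- s) F i (v ord0 i)).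
  exact: H.
elim=> [|a s IH].
  have -> : (fun v : 'rV[R]_N => \sum_(i <- [::]) F i (v ord0 i)) = fun=> 0.
    by apply: funext => v; rewrite big_nil.
  by move=> x; apply: cst_continuous.
have -> : (fun v : 'rV[R]_N => \sum_(i <- a :: s) F i (v ord0 i)) =
   (fun v : 'rV[R]_N => F a (v ord0 a)) + (fun v : 'rV[R]_N => \sum_(i <- s) F i (v ord0 i)).
  by apply: funext => v; rewrite big_cons.
move=> x; apply: (@continuousD R R^o _ _ _ x); last exact: IH.
apply: continuous_comp; first exact: coord_continuous. exact: Fc.
Qed.

Lemma cont_of (f : R -> R) : Ranalysis1.continuity f -> continuous f.
Proof. by move=> fc x; apply/continuity_pt_cvg; exact: fc. Qed.

Lemma sum_closed N (F : 'I_N -> R -> R) (b : R) :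
  (forall i, continuous (F i)) ->
  closed [set v : 'rV[R]_N | \sum_(i < N) F i (v ord0 i) <= b].
Proof.
move=> Fc.
have -> : [set v : 'rV[R]_N | \sum_(i < N) F i (v ord0 i) <= b] =
  (fun v : 'rV[R]_N => \sum_(i < N) F i (v ord0 i)) @^-1` [set x | x <= b].
  by [].
apply: preimage_closed; last exact: closed_le.
by move=> x _; apply: sum_cont.
Qed.

Lemma evt_poly N (w : nat -> R) (h : nat -> R -> R) (PS PR : R) :
  (forall n, Ranalysis1.continuity (h n)) -> Rle 0 PS -> Rle 0 PR ->
  exists y, feasY N w PS PR y /\ forall y', feasY N w PS PR y' ->
     Rle (rsum N (fun n => h n (y' n))) (rsum N (fun n => h n (y n))).
Proof.
move=> hc /RleP PS0 /RleP PR0.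
pose A := [set v : 'rV[R]_N | (forall i : 'I_N, 0 <= v ord0 i) /\
   \sum_(i < N) v ord0 i <= PR /\ \sum_(i < N) w i * v ord0 i <= PS].
pose G := fun v : 'rV[R]_N => \sum_(i < N) h i (v ord0 i).
have Gc : continuous G by apply: (sum_cont _ (fun i : 'I_N => h i)) => i; apply: cont_of.
have A0 : A !=set0.
  exists 0; split; first by move=> i; rewrite mxE.
  split; rewrite big1 // => i _; by rewrite mxE ?mulr0.
have Acl : closed A.
  have -> : A = (\bigcap_(i in setT) [set v : 'rV[R]_N | 0 <= v ord0 i]) `&`
     ([set v : 'rV[R]_N | \sum_(i < N) (fun x => x) (v ord0 i) <= PR] `&`
      [set v : 'rV[R]_N | \sum_(i < N) (fun x => w i * x) (v ord0 i) <= PS]).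
    apply/seteqP; split => v /= [H1 [H2 H3]]; (split; [move=> i *; exact: H1 | by split]).
  apply: closedI; last apply: closedI.
  - apply: closed_bigI => i _.
    have -> : [set v : 'rV[R]_N | 0 <= v ord0 i] =
      (fun v : 'rV[R]_N => v ord0 i) @^-1` [set x | 0 <= x] by [].
    apply: preimage_closed; last exact: closed_ge.
    by move=> x _; exact: (@coord_continuous R 1 N ord0 i).
  - apply: (sum_closed _ (fun (i : 'I_N) (x : R) => x)) => i; apply: cont_of.
    exact: (Ranalysis1.derivable_continuous _ Ranalysis1.derivable_id).
  - apply: (sum_closed _ (fun (i : 'I_N) (x : R) => w i * x)) => i; apply: cont_of.
    exact: (Ranalysis1.continuity_scal _ (w i) (Ranalysis1.derivable_continuous _ Ranalysis1.derivable_id)).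
have Acpt : compact A.
  apply: (subclosed_compact Acl
    (@rV_compact _ N (fun=> `[0, PR]%classic) (fun=> @segment_compact _ 0 PR))).
  move=> v [H1 [H2 _]] i /=; rewrite in_itv /= H1 /=.
  apply: le_trans H2; rewrite (bigD1 i) //= lerDl; apply: sumr_ge0 => j _; exact: H1.
have [c cA cmax] := EVT_max_rV A0 Acpt (continuous_subspaceT Gc).
move: cA; rewrite inE => cA.
pose y := fun n : nat => if @insub _ (fun k => k < N)%N 'I_N n is Some i then c ord0 i else 0.
have yE : forall i : 'I_N, y i = c ord0 i by move=> i; rewrite /y valK.
have sumy : forall f : R -> R, rsum N (fun n => f (y n)) = \sum_(i < N) f (c ord0 i).
  by move=> f; rewrite rsumE; apply: eq_bigr => i _; rewrite yE.
exists y; split.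
  case: cA => [H1 [H2 H3]]; split; last split.
  - move=> n /ssrnat.ltP nN; apply/RleP; rewrite /y insubT; exact: H1.
  - by apply/RleP; move: (sumy id) => /= ->.
  - apply/RleP; rewrite rsumE; under eq_bigr => i _ do rewrite yE; exact: H3.
move=> y' [H1 [H2 H3]].
pose v := \row_(i < N) y' i.
have vA : A v.
  split; first by move=> i; rewrite mxE; apply/RleP/H1/ssrnat.ltP.
  split.
    by apply/RleP; under eq_bigr => i _ do rewrite mxE; rewrite -rsumE.
  by apply/RleP; under eq_bigr => i _ do rewrite mxE; rewrite -(rsumE N (fun n => w n * y' n)).
have := cmax v; rewrite inE => /(_ vA); rewrite /G.
under eq_bigr => i _ do rewrite mxE.
rewrite -(rsumE N (fun n => h n (y' n))).
rewrite rsumE; under [in X in _ <= X -> _]eq_bigr => i _ do rewrite -yE.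
rewrite -(rsumE N (fun n => h n (y n))).
by move/RleP.
Qed.
End MC.


Theorem theorem1 (N : nat) (s2 PS PR : R) (gsr grm gre : nat -> R) :
  (1 <= N)%nat -> 0 < s2 -> 0 < PS -> 0 < PR ->
  (forall n, (n < N)%nat ->
     0 < gsr n /\ 0 < grm n /\ 0 < gre n /\ gre n < grm n) ->
  exists Ps Pr t : nat -> R,
    P1_feasible N s2 PS PR gsr grm gre Ps Pr t /\
    (forall Ps' Pr' t' : nat -> R,
        P1_feasible N s2 PS PR gsr grm gre Ps' Pr' t' ->
        P1_objective N s2 gre Pr' t' <= P1_objective N s2 gre Pr t) /\
    (forall n, (n < N)%nat -> Ps n * gsr n = Pr n * grm n).
Proof.
  intros HN Hs HPS HPR Hg.
  set (w := fun n => grm n / gsr n).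
  set (h := fun n => match Compare_dec.lt_dec n N with
                     | left _ => hf (grm n / s2) (gre n / s2)
                     | right _ => fun _ : R => 0 end).
  assert (hc : forall n, continuity (h n)).
  { intro n; unfold h; destruct (Compare_dec.lt_dec n N) as [Hn|Hn].
    - destruct (Hg n Hn) as [G1 [G2 [G3 G4]]].
      apply hf_cont; apply Rlt_le, Rdiv_lt_0_compat; auto.
    - apply continuity_const; intros ? ?; reflexivity. }
  destruct (MC.evt_poly N w h PS PR hc (Rlt_le _ _ HPS) (Rlt_le _ _ HPR))
    as [y [[Y1 [Y2 Y3]] Yopt]].
  assert (E : forall n, (n < N)%nat -> w n * y n * gsr n = y n * grm n).
  { intros n Hn; destruct (Hg n Hn) as [G1 _]; unfold w; field; lra. }
  assert (Hobj : P1_objective N s2 gre y (fun n => y n * grm n / s2) =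
                 rsum N (fun n => h n (y n))).
  { unfold P1_objective; apply rsum_ext; intros n Hn.
    unfold h; destruct (Compare_dec.lt_dec n N) as [_|C]; [|lia].
    unfold hf; rewrite (Rabs_pos_eq _ (Y1 n Hn)).
    replace (y n * (grm n / s2)) with (y n * grm n / s2) by (field; lra).
    replace (y n * (gre n / s2)) with (y n * gre n / s2) by (field; lra).
    reflexivity. }
  exists (fun n => w n * y n), y, (fun n => y n * grm n / s2).
  split; [|split].
  - split; [|split; auto].
    intros n Hn; destruct (Hg n Hn) as [G1 [G2 [G3 G4]]].
    pose proof (Y1 n Hn) as Hy.
    assert (Hw : 0 <= w n) by (unfold w; apply Rlt_le, Rdiv_lt_0_compat; auto).
    rewrite (E n Hn).
    split; [lra|split; [lra|split; [nra|split; [lra|split; [nra|]]]]].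
    assert (0 <= y n * grm n / s2) by (apply Rmult_le_pos; [nra | left; apply Rinv_0_lt_compat; auto]).
    lra.
  - intros Ps' Pr' t' [F1 [F2 F3]].
    set (y2 := fun n => Rmin (Pr' n) (Ps' n * gsr n / grm n)).
    rewrite Hobj.
    apply Rle_trans with (rsum N (fun n => h n (y2 n))).
    + unfold P1_objective; apply rsum_le; intros n Hn.
      unfold h; destruct (Compare_dec.lt_dec n N) as [_|C]; [|lia].
      destruct (Hg n Hn) as [G1 [G2 [G3 G4]]].
      destruct (F1 n Hn) as [K1 [K2 [K3 [K4 [K5 K6]]]]].
      apply term_le; auto.
    + apply Yopt. split; [|split].
      * intros n Hn; destruct (Hg n Hn) as [G1 [G2 [G3 G4]]].
        destruct (F1 n Hn) as [K1 [K2 [K3 [K4 [K5 K6]]]]].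
        unfold y2; apply Rmin_glb; auto.
        apply Rmult_le_pos; [nra | left; apply Rinv_0_lt_compat; auto].
      * apply Rle_trans with (rsum N Pr'); auto.
        apply rsum_le; intros n Hn; apply Rmin_l.
      * apply Rle_trans with (rsum N Ps'); auto.
        apply rsum_le; intros n Hn.
        destruct (Hg n Hn) as [G1 [G2 [G3 G4]]].
        assert (Hw : 0 <= w n) by (unfold w; apply Rlt_le, Rdiv_lt_0_compat; auto).
        apply Rle_trans with (w n * (Ps' n * gsr n / grm n)).
        -- apply Rmult_le_compat_l; auto; apply Rmin_r.
        -- unfold w; right; field; lra.
  - intros n Hn; apply (E n Hn).
Qed.
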